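(* Let $n\ge6$ and $m\ge2$. The unique set family of shape $(m^n)$ and type $(m+n-4,\ m+2,\ m+2,\ (m-1)^{n-6},\ (m-2)^3)$ is $\{1,2,\dots,m-2,m+1,m+2\}^{\preceq}\cup\{1,2,\dots,m-2,m-1,m+n-4\}^{\preceq}$. This type is not of the form $(m^n)\star\nu$ for any partition $\nu$ of $n-1$ with at most $m$ parts.
   Context: Majorization: for $m$-subsets $X=\{x_1<\dots<x_m\}$, $Y=\{y_1<\dots<y_m\}$ of $\mathbf{N}$, $X\preceq Y$ if $x_i\le y_i$ for all $i$. For an $m$-subset $A$, the downset $A^{\preceq}$ is the set of all $m$-subsets $X$ of $\mathbf{N}$ with $X\preceq A$. A set family of shape $(m^n)$ is a collection of $n$ distinct $m$-subsets of $\mathbf{N}$; it has type $\lambda$ (largest part $a$, conjugate $\lambda'$) if for each $i\in\{1,\dots,a\}$ exactly $\lambda'_i$ of its sets contain $i$. In the partition above, exponents denote repeated parts, and parts equal to $0$ (when $m=2$) are omitted. For a partition $\nu$ of $n-1$ with $k\le m$ parts, $(m^n)\star\nu$ is the partition obtained from the Young diagram of $(m^n)$ by, for each $1\le i\le k$, deleting $\nu_i$ boxes (from the bottom) of column $m+1-i$ and adding $\nu_i$ boxes to row $i$. *)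

(* Defs.v *)
From mathcomp Require Import all_boot.
From mathcomp Require Import finmap.
Set Implicit Arguments. Unset Strict Implicit. Unset Printing Implicit Defensive.
Local Open Scope fset_scope.

(* N = {1,2,3,...}; a subset X of N is a finite set of nats not containing 0. *)

Definition msubset (m : nat) (X : {fset nat}) : Prop :=
  #|` X| = m /\ 0 \notin X.

Definition majorized (X Y : {fset nat}) : bool :=
  all2 leq (sort leq X) (sort leq Y).

Definition in_downset (m : nat) (A X : {fset nat}) : Prop :=
  msubset m X /\ majorized X A.

Definition shape_family (m n : nat) (F : {fset {fset nat}}) : Prop :=
  #|` F| = n /\ (forall X, X \in F -> msubset m X).

Local Close Scope fset_scope.

(* partitions as (weakly decreasing) lists of parts *)
Definition largest_part (lam : seq nat) : nat := foldr maxn 0 lam.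
Definition conj_part (lam : seq nat) (i : nat) : nat := count (fun p => i <= p) lam.

Definition has_type (lam : seq nat) (F : {fset {fset nat}}) : Prop :=
  forall i, 1 <= i <= largest_part lam ->
    count (fun X : {fset nat} => i \in X) (enum_fset F) = conj_part lam i.

Definition is_partition_of (N : nat) (nu : seq nat) : bool :=
  sorted geq nu && all (fun p => 0 < p) nu && (sumn nu == N).

(* (m^n) * nu : row lengths (rows 1..n) of the diagram obtained from the
   n x m rectangle by deleting nu_i boxes from the bottom of column m+1-i and
   adding nu_i boxes to row i (1 <= i <= k = size nu).  Column m+1-i (i.e.
   0-based part index i-1) keeps height n - nu_i; row j (1-based) then has
   #{ i in 1..m | n - nu_i >= j } remaining boxes, plus nu_j added boxes. *)
Definition star (m n : nat) (nu : seq nat) : seq nat :=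
  mkseq (fun j => count (fun i => j.+1 + nth 0 nu i <= n) (iota 0 m) + nth 0 nu j) n.

Definition same_partition (l1 l2 : seq nat) : bool :=
  filter (fun p => 0 < p) l1 == filter (fun p => 0 < p) l2.

Definition lam56 (m n : nat) : seq nat :=
  [:: m + n - 4; m + 2; m + 2] ++ nseq (n - 6) (m - 1) ++ nseq 3 (m - 2).

Local Open Scope fset_scope.
Definition A56 (m : nat) : {fset nat} := seq_fset tt (iota 1 (m - 2) ++ [:: m + 1; m + 2])%N.
Definition B56 (m n : nat) : {fset nat} := seq_fset tt (iota 1 (m - 1) ++ [:: m + n - 4])%N.

(* Main.v *)
Require Import Defs.
From mathcomp Require Import all_boot finmap zify.

Lemma sum_bool (T : Type) (R : seq T) (a : pred T) :
  \sum_(i <- R) (a i : nat) = count a R.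
Proof. by elim: R => [|x R IH]; rewrite ?big_nil ?big_cons ?IH. Qed.

Lemma swap_count (T U : Type) (R : seq T) (G : seq U) (P : T -> U -> bool) :
  \sum_(i <- R) count (P i) G = \sum_(X <- G) count (fun i => P i X) R.
Proof.
elim: G => [|X G IH] /=; first by rewrite big_nil big1.
by rewrite big_cons big_split /= IH sum_bool.
Qed.

Lemma sum_eq_bound (T : eqType) (s : seq T) (f g : T -> nat) :
  (forall x, x \in s -> f x <= g x) ->
  \sum_(x <- s) g x <= \sum_(x <- s) f x -> forall x, x \in s -> f x = g x.
Proof.
elim: s => [|y s IH] //= H; rewrite !big_cons => Hs x.
have Hy := H y (mem_head _ _).
have Hs' : forall x, x \in s -> f x <= g x by move=> z zs; apply: H; rewrite inE zs orbT.
have Hsum : \sum_(x <- s) f x <= \sum_(x <- s) g x by rewrite big_seq_cond [X in _ <= X]big_seq_cond; apply: leq_sum => i /andP[/Hs'].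
rewrite inE => /orP[/eqP->|xs]; first by lia.
apply: IH => //; lia.
Qed.

Lemma sum_const_nat (T : Type) (s : seq T) (c : nat) : \sum_(x <- s) c = size s * c.
Proof. by elim: s => [|x s IH]; rewrite ?big_nil ?big_cons ?IH //= mulSn. Qed.

Lemma count_le1 (T : eqType) (s : seq T) (p : pred T) :
  uniq s -> (forall a b, a \in s -> b \in s -> p a -> p b -> a = b) -> count p s <= 1.
Proof.
move=> us H; rewrite -size_filter.
have uf : uniq (filter p s) by rewrite filter_uniq.
have sub : forall z, z \in filter p s -> (z \in s) && p z by move=> z; rewrite mem_filter andbC.
move: uf sub; case: (filter p s) => [|a [|b r]] //= /andP[nab _] sub.
have /andP[as' pa] := sub a (mem_head _ _).
have /andP[bs pb] : (b \in s) && p b by apply: sub; rewrite !inE eqxx orbT.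
by move: nab; rewrite (H a b) // inE eqxx.
Qed.

Lemma count_le1_eq (T : eqType) (s : seq T) (p : pred T) a b :
  count p s <= 1 -> a \in s -> b \in s -> p a -> p b -> a = b.
Proof.
move=> c1 as' bs pa pb; apply/eqP; apply/negPn/negP => nab.
have : size [:: a; b] <= size (filter p s).
  apply: uniq_leq_size; first by rewrite /= inE nab.
  by move=> z; rewrite !inE mem_filter => /orP[]/eqP->; rewrite ?pa ?pb.
by rewrite size_filter /=; lia.
Qed.

Lemma count_mem_swap (X R : seq nat) : uniq X -> uniq R ->
  count (fun i => i \in X) R = count (fun i => i \in R) X.
Proof.
move=> uX uR; rewrite -!size_filter; apply: perm_size; apply: uniq_perm; rewrite ?filter_uniq //.
by move=> z; rewrite !mem_filter andbC.
Qed.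

Lemma sorted_lb (s : seq nat) k : sorted ltn s -> all (fun x => k <= x) s ->
  forall i, i < size s -> k + i <= nth 0 s i.
Proof.
elim: s k => [|x s IH] k //= Hs /andP[kx Ha] [|i] /=; first by rewrite addn0.
move=> Hi.
have Hs' : sorted ltn s by move: Hs; case: s {IH Ha Hi} => //= y s /andP[].
have Ha' : all (fun y => k.+1 <= y) s.
  move: Hs; rewrite (path_sortedE ltn_trans) => /andP[/allP Hx _].
  apply/allP => y ys; have := Hx y ys; lia.
have := IH k.+1 Hs' Ha' i Hi; lia.
Qed.

Lemma all2_nth (s t : seq nat) : all2 leq s t -> size s = size t /\
  forall i, nth 0 s i <= nth 0 t i.
Proof.
elim: s t => [|x s IH] [|y t] //=.
move=> /andP[xy /IH[e H]].
by split; [rewrite e | case=> //= i].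

Qed.

Lemma all2_leq_cat (s t t' : seq nat) : all2 leq t t' -> all2 leq (s ++ t) (s ++ t').
Proof. by move=> H; elim: s => //= x s ->; rewrite leqnn. Qed.

Definition mk (m x y : nat) : {fset nat} := seq_fset tt (iota 1 (m - 2) ++ [:: x; y]).
Definition E56 (m n : nat) : seq (nat * nat) :=
  [seq (m - 1, w) | w <- iota m (n - 3)] ++ [:: (m, m + 1); (m, m + 2); (m + 1, m + 2)].
Definition F56 (m n : nat) : {fset {fset nat}} := seq_fset tt [seq mk m p.1 p.2 | p <- E56 m n].
Definition good (m n x y : nat) : bool :=
  [&& m - 1 <= x, x < y, y <= m + n - 4 & (x == m - 1) || (y <= m + 2)].

Lemma mem_mk (m x y z : nat) : (z \in mk m x y) = [|| 1 <= z <= m - 2, z == x | z == y].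
Proof. by rewrite seq_fsetE mem_cat mem_iota !inE; congr (_ || _); apply/idP/idP; lia. Qed.

Lemma memE (m n x y : nat) : 2 <= m -> 6 <= n -> ((x, y) \in E56 m n) = good m n x y.
Proof.
move=> hm hn; rewrite /E56 /good mem_cat !inE.
apply/idP/idP.
- case/orP => [/mapP[w] | ].
  + rewrite mem_iota => Hw [-> ->]; apply/and4P; split; rewrite ?eqxx ?orTb //; lia.
  + by rewrite !xpair_eqE => /or3P[]/andP[/eqP-> /eqP->]; apply/and4P; split => //; lia.
- case/and4P => h1 h2 h3 h4.
  case: (eqVneq x (m - 1)) => [ex|nx].
  + apply/orP; left; apply/mapP; exists y; rewrite ?mem_iota ?ex //; lia.
  + have h5 : y <= m + 2 by move: h4; rewrite (negbTE nx).
    apply/orP; right; rewrite !xpair_eqE.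
    have [ex|ex] : x = m \/ x = m + 1 by lia.
    * have [ey|ey] : y = m + 1 \/ y = m + 2 by lia.
      - by rewrite ex ey !eqxx ?orbT.
      - by rewrite ex ey !eqxx ?orbT.
    * have ey : y = m + 2 by lia.
      by rewrite ex ey !eqxx ?orbT.
Qed.

Lemma mk_inj (m x y x' y' : nat) : m - 1 <= x < y -> m - 1 <= x' < y' ->
  mk m x y = mk m x' y' -> x = x' /\ y = y'.
Proof.
move=> h h' e.
have e1 := congr1 (fun S => x \in S) e; have e2 := congr1 (fun S => y \in S) e.
have e3 := congr1 (fun S => x' \in S) e; have e4 := congr1 (fun S => y' \in S) e.
move: e1 e2 e3 e4 => /=; rewrite !mem_mk !eqxx !orbT /=.
move=> e1 e2 e3 e4. lia.
Qed.

Lemma uniq_mkseq (m x y : nat) : m - 1 <= x < y -> uniq (iota 1 (m - 2) ++ [:: x; y]).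
Proof.
move=> h; rewrite cat_uniq iota_uniq /= !inE !mem_iota andbT. lia.
Qed.

Lemma sorted_mkseq (m x y : nat) : m - 1 <= x < y -> sorted leq (iota 1 (m - 2) ++ [:: x; y]).
Proof.
move=> h; rewrite (sorted_pairwise leq_trans) pairwise_cat -(sorted_pairwise leq_trans) iota_sorted /=.
rewrite andbT andbT; apply/andP; split; last by lia.
apply/allrelP => a b; change nat in a; change nat in b; rewrite mem_iota !inE => ha /orP[]/eqP->; lia.
Qed.

Lemma card_mk (m x y : nat) : 2 <= m -> m - 1 <= x < y -> #|` mk m x y| = m.
Proof.
move=> hm h; rewrite /mk size_seq_fset undup_id ?uniq_mkseq // size_cat size_iota /=; lia.
Qed.

Lemma msubset_mk (m x y : nat) : 2 <= m -> m - 1 <= x < y -> msubset m (mk m x y).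
Proof. by move=> hm h; split; [exact: card_mk _ _ _ hm h | rewrite mem_mk; apply/negP; lia]. Qed.

Lemma sort_mk (m x y : nat) : m - 1 <= x < y ->
  sort leq (mk m x y) = iota 1 (m - 2) ++ [:: x; y].
Proof.
move=> h; rewrite -[RHS](sorted_sort leq_trans (sorted_mkseq _ _ _ h)).
apply/(perm_sortP leq_total leq_trans anti_leq).
by rewrite /mk -{2}(undup_id (uniq_mkseq _ _ _ h)) seq_fset_perm.
Qed.

Lemma uniqE (m n : nat) : 2 <= m -> uniq (E56 m n).
Proof.
move=> hm; rewrite /E56 cat_uniq map_inj_uniq ?iota_uniq; last by move=> a b [].
have nm : forall a b, a != m - 1 -> ((a, b) \in [seq (m - 1, w) | w <- iota m (n - 3)]) = false.
  by move=> a b na; apply/mapP => -[w _ [e _]]; rewrite e eqxx in na.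
rewrite /= !inE !xpair_eqE !nm /=; try (apply/eqP; lia).

Qed.

Lemma uniq_mapE (m n : nat) : 2 <= m -> 6 <= n -> uniq [seq mk m p.1 p.2 | p <- E56 m n].
Proof.
move=> hm hn; rewrite map_inj_in_uniq ?uniqE // => -[a b] [c d].
rewrite !memE // => /and4P[h1 h2 _ _] /and4P[h3 h4 _ _] /= e.
by case: (mk_inj _ _ _ _ _ _ _ e) => [||-> ->] //; apply/andP.
Qed.

Lemma card_F (m n : nat) : 2 <= m -> 6 <= n -> #|` F56 m n| = n.
Proof.
move=> hm hn; rewrite /F56 size_seq_fset undup_id ?uniq_mapE // size_map size_cat size_map size_iota /=; lia.
Qed.

Lemma inF (m n : nat) X : 2 <= m -> 6 <= n ->
  (X \in F56 m n) <-> exists x y, good m n x y /\ X = mk m x y.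
Proof.
move=> hm hn; rewrite /F56 seq_fsetE; split.
- move=> /mapP[[a b]]; rewrite memE // => g ->.
  by exists a, b.
- move=> [x [y [g ->]]]; apply/mapP; exists (x, y) => //.
  by rewrite memE.
Qed.

Lemma downset_shape (m u v : nat) (X : {fset nat}) : 2 <= m -> msubset m X ->
  all2 leq (sort leq X) (iota 1 (m - 2) ++ [:: u; v]) ->
  exists x y, [/\ m - 1 <= x < y, x <= u, y <= v & X = mk m x y].
Proof.
move=> hm [cX X0] Hall.
have Hmem : forall z, (z \in X) = (z \in sort leq X) by move=> z; rewrite mem_sort.
have Hsz : size (sort leq X) = m by rewrite size_sort.
have Hs : sorted ltn (sort leq X).
  by rewrite ltn_sorted_uniq_leq sort_uniq fset_uniq (sort_sorted leq_total).
have Hpos : all (fun x => 1 <= x) (sort leq X).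
  apply/allP => z; rewrite -Hmem => zX; case: z zX => //= zX; by rewrite zX in X0.
move: (sort leq X) Hmem Hsz Hs Hpos Hall => s Hmem Hsz Hs Hpos Hall.
have [_ Hn] := all2_nth _ _ Hall.
have Hlb := sorted_lb _ _ Hs Hpos.
set x := nth 0 s (m - 2); set y := nth 0 s (m - 1).
have es : s = iota 1 (m - 2) ++ [:: x; y].
  apply: (@eq_from_nth _ 0); first by rewrite size_cat size_iota /= Hsz; lia.
  move=> i; rewrite Hsz => Hi.
  rewrite nth_cat size_iota.
  case: ltnP => hi.
  - have := Hlb i; have := Hn i; rewrite nth_cat size_iota hi nth_iota //.
    rewrite Hsz => h1 h2; have := h2 Hi; lia.
  - have [->|->] : i = m - 2 \/ i = m - 1 by lia.
    + by rewrite subnn.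
    + by have -> : m - 1 - (m - 2) = 1 by lia.
have hx := Hlb (m - 2); rewrite Hsz -/x in hx.
have hxy : x < y.
  by move: Hs; rewrite es => /cat_sorted2[_] /= /andP[].
have hu := Hn (m - 2); rewrite nth_cat size_iota ltnn subnn /= -/x in hu.
have hv := Hn (m - 1); rewrite nth_cat size_iota -/y in hv.
exists x, y; split => //.
- apply/andP; split => //; have := hx; lia.
- move: hv; case: ltnP; [lia|] => _; have -> : m - 1 - (m - 2) = 1 by lia. done.
- apply/fsetP => z; rewrite Hmem es /mk seq_fsetE //.
Qed.

Lemma B56_mk (m n : nat) : 2 <= m -> B56 m n = mk m (m - 1) (m + n - 4).
Proof.
move=> hm; rewrite /B56 /mk; congr seq_fset.
have -> : m - 1 = (m - 2) + 1 by lia.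
rewrite iotaD -catA /=; congr (_ ++ _); congr (_ :: _); lia.
Qed.

Lemma A56_mk (m : nat) : A56 m = mk m (m + 1) (m + 2).
Proof. by []. Qed.

Lemma downset_iff (m n : nat) X : 2 <= m -> 6 <= n ->
  (in_downset m (A56 m) X \/ in_downset m (B56 m n) X) <->
  exists x y, good m n x y /\ X = mk m x y.
Proof.
move=> hm hn; split.
- case=> -[hX]; rewrite /majorized ?A56_mk ?B56_mk // sort_mk; try lia.
  + case/(downset_shape _ _ _ _ hm hX) => x [y [h1 h2 h3 ->]].
    exists x, y; split => //; apply/and4P; split; try lia.
  + case/(downset_shape _ _ _ _ hm hX) => x [y [h1 h2 h3 ->]].
    exists x, y; split => //; apply/and4P; split; try lia.
- move=> [x [y [/and4P[h1 h2 h3 h4] ->]]].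
  have hxy : m - 1 <= x < y by lia.
  case: (eqVneq x (m - 1)) => ex.
  + right; split; first exact: msubset_mk.
    rewrite /majorized B56_mk // !sort_mk //; last by lia.
    by apply: all2_leq_cat => /=; rewrite ex leqnn h3.
  + left; split; first exact: msubset_mk.
    rewrite /majorized A56_mk !sort_mk //; last by lia.
    apply: all2_leq_cat => /=; move: h4; rewrite (negbTE ex) /= => h4.
    apply/andP; split; lia.
Qed.

Lemma conj_lam (m n i : nat) : conj_part (lam56 m n) i =
  (i <= m + n - 4) + (i <= m + 2) * 2 + (i <= m - 1) * (n - 6) + (i <= m - 2) * 3.
Proof. rewrite /conj_part /lam56 /= count_cat !count_nseq /=. lia. Qed.

Lemma fold_le (l : seq nat) a : all (fun p => p <= a) l -> foldr maxn 0 l <= a.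
Proof. by elim: l => //= x l IH /andP[h1 /IH h2]; rewrite geq_max h1 h2. Qed.

Lemma largest_lam (m n : nat) : 2 <= m -> 6 <= n -> largest_part (lam56 m n) = m + n - 4.
Proof.
move=> hm hn; rewrite /largest_part /lam56 /=; apply/maxn_idPl.
have := fold_le (m + 2 :: m + 2 :: nseq (n - 6) (m - 1) ++ nseq 3 (m - 2)) (m + n - 4).
apply.
rewrite /= all_cat !all_nseq /= andbT. lia.
Qed.

Lemma count_F (m n i : nat) : 2 <= m -> 6 <= n ->
  count (fun X => i \in X) (enum_fset (F56 m n)) =
  [|| 1 <= i <= m - 2 | i == m - 1] * (n - 3) + (~~ [|| 1 <= i <= m - 2 | i == m - 1]) * (m <= i < m + (n - 3))
  + [|| 1 <= i <= m - 2, i == m | i == m + 1] + [|| 1 <= i <= m - 2, i == m | i == m + 2]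
  + [|| 1 <= i <= m - 2, i == m + 1 | i == m + 2].
Proof.
move=> hm hn.
rewrite /F56; have /permP -> := seq_fset_perm tt [seq mk m p.1 p.2 | p <- E56 m n]; rewrite undup_id ?uniq_mapE // count_map /E56 count_cat count_map /= !mem_mk.
rewrite -/(addn _ _).
set c := [|| 1 <= i <= m - 2 | i == m - 1].
have -> : count (preim (fun p : nat * nat => mk m p.1 p.2) (fun X : {fset nat} => i \in X) \o (fun w : nat => (m - 1, w))) (iota m (n - 3))
   = count (fun w => c || (w == i)) (iota m (n - 3)).
  by apply: eq_count => w /=; rewrite mem_mk /c orbA (eq_sym i w).
case: (boolP c) => hc.
- rewrite (eq_count (a2 := predT)) // count_predT size_iota /=; lia.
- rewrite (eq_count (a2 := pred1 i)) // count_uniq_mem ?iota_uniq // mem_iota /=; lia.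
Qed.

Ltac bset e := first [ let H := fresh in have H : e = true by lia; rewrite ?H; clear H
                      | let H := fresh in have H : e = false by lia; rewrite ?H; clear H ].

Ltac ballset m n i :=
  bset (0 < i <= m - 2); bset (m <= i < m + (n - 3));
  bset (i == m - 1); bset (i == m); bset (i == m + 1); bset (i == m + 2);
  bset (i <= m + n - 4); bset (i <= m + 2); bset (i <= m - 1); bset (i <= m - 2).

Lemma type_F (m n : nat) : 2 <= m -> 6 <= n -> has_type (lam56 m n) (F56 m n).
Proof.
move=> hm hn i; rewrite largest_lam // count_F // conj_lam => hi.
have : i <= m - 2 \/ i = m - 1 \/ i = m \/ i = m + 1 \/ i = m + 2 \/ m + 3 <= i by lia.
case=> [h|[h|[h|[h|[h|h]]]]]; ballset m n i; rewrite /=; lia.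
Qed.

Lemma decomp (m a : nat) (X : {fset nat}) : 2 <= m -> msubset m X ->
  (forall i, 1 <= i <= m - 2 -> i \in X) -> (forall z, z \in X -> z <= a) ->
  exists x y : nat, [/\ m - 1 <= x, x < y, y <= a & X = mk m x y].
Proof.
move=> hm [cX X0] hbase hle.
pose Bs : {fset nat} := seq_fset tt (iota 1 (m - 2)).
have sub : fsubset Bs X.
  by apply/fsubsetP => z; rewrite seq_fsetE mem_iota => hz; apply: hbase; lia.
have cD : #|` fsetD X Bs| = 2.
  rewrite cardfsDS // cX /Bs size_seq_fset undup_id ?iota_uniq // size_iota; lia.
have memD : forall z : nat, (z \in enum_fset (fsetD X Bs)) = (z \in X) && ~~ (1 <= z <= m - 2).
  by move=> z; rewrite -[LHS]/(z \in fsetD X Bs) in_fsetD seq_fsetE mem_iota andbC.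
have uD := fset_uniq (fsetD X Bs).
move: (enum_fset (fsetD X Bs)) cD memD uD => s cD memD uD.
case: s cD memD uD => [|x [|y [|]]] //= _ memD.
rewrite inE andbT => nxy.
have hx := memD x; have hy := memD y.
rewrite !inE eqxx /= in hx; rewrite !inE eqxx orbT in hy.
move/esym: hx => /andP[xX hx]; move/esym: hy => /andP[yX hy].
have x0 : x != 0 by apply: contraNneq X0 => <-.
have y0 : y != 0 by apply: contraNneq X0 => <-.
have hxa := hle x xX; have hya := hle y yX.
have key : forall z, (z \in X) = [|| 1 <= z <= m - 2, z == x | z == y].
  move=> z; case: (boolP (1 <= z <= m - 2)) => hz /=; first by rewrite hbase.
  by have := memD z; rewrite !inE hz andbT => <-.
case: (ltnP x y) => hxy.
- exists x, y; split; try lia.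
  by apply/fsetP => z; rewrite key mem_mk.
- exists y, x; split; try lia.
  by apply/fsetP => z; rewrite key mem_mk orbA orbAC -orbA.
Qed.

Lemma cnt_iota (p a : nat) : p <= a -> count (fun i => i <= p) (iota 1 a) = p.
Proof.
move=> hp; have -> : a = p + (a - p) by lia.
rewrite iotaD count_cat.
rewrite (@eq_in_count _ _ predT (iota 1 p)); last by move=> i; rewrite mem_iota /=; lia.
rewrite (@eq_in_count _ _ pred0 (iota (1 + p) _)); last by move=> i; rewrite mem_iota /=; lia.
by rewrite count_predT count_pred0 size_iota addn0.
Qed.

Lemma all_lam (m n : nat) : 2 <= m -> 6 <= n -> all (fun p => p <= m + n - 4) (lam56 m n).
Proof. move=> hm hn; rewrite /lam56 /= all_cat !all_nseq /= andbT. lia. Qed.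

Lemma sum_lam (m n : nat) : 2 <= m -> 6 <= n -> sumn (lam56 m n) = n * m.
Proof.
move=> hm hn; rewrite /lam56 /= sumn_cat !sumn_nseq.
have [k ek] : exists k, n = k + 6 by exists (n - 6); lia.
have [j ej] : exists j, m = j + 2 by exists (m - 2); lia.
subst; have -> : j + 2 - 1 = j + 1 by lia.
have -> : j + 2 - 2 = j by lia. have -> : k + 6 - 6 = k by lia.
have -> : j + 2 + (k + 6) - 4 = j + k + 4 by lia.
rewrite !mulnDl !mulnDr [k * j]mulnC /=. lia.
Qed.

Arguments sum_eq_bound {T s f g}.
Arguments count_le1_eq {T s p a b}.

Lemma mem_mk_m1 (m x y : nat) : m - 1 <= x < y -> (m - 1 \in mk m x y) = (x == m - 1).
Proof. move=> h; rewrite mem_mk; apply/idP/idP; lia. Qed.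

Lemma uniqueness (m n : nat) (G : {fset {fset nat}}) : 2 <= m -> 6 <= n ->
  shape_family m n G -> has_type (lam56 m n) G -> G = F56 m n.
Proof.
move=> hm hn [cG hG] hT.
rewrite /has_type largest_lam // in hT.
have hT' : forall i, 1 <= i <= m + n - 4 -> count (fun X : {fset nat} => i \in X) (enum_fset G) =
   (i <= m + n - 4) + (i <= m + 2) * 2 + (i <= m - 1) * (n - 6) + (i <= m - 2) * 3.
  by move=> i hi; rewrite hT // conj_lam.
have hbase : forall X, X \in G -> forall i, 1 <= i <= m - 2 -> i \in X.
  move=> X XG i hi.
  have : all (fun X : {fset nat} => i \in X) (enum_fset G).
    rewrite all_count hT' ?cG; last by lia.
    apply/eqP; lia.
  move=> H. exact: (allP H X XG).
pose R := iota 1 (m + n - 4).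
have S1 : \sum_(X <- enum_fset G) count (fun z => z \in R) X = n * m.
  transitivity (\sum_(X <- enum_fset G) count (fun i : nat => i \in X) R).
    by apply: eq_big_seq => X XG; rewrite count_mem_swap ?iota_uniq ?fset_uniq.
  rewrite -(@swap_count _ _ R (enum_fset G) (fun i (X : {fset nat}) => i \in X)).
  transitivity (\sum_(i <- R) conj_part (lam56 m n) i).
    by apply: eq_big_seq => i; rewrite mem_iota => hi; rewrite hT //; lia.
  rewrite /conj_part (@swap_count _ _ R (lam56 m n) (fun i p => i <= p)).
  transitivity (\sum_(p <- lam56 m n) p).
    apply: eq_big_seq => p pl; apply: cnt_iota.
    exact: (allP (all_lam _ _ hm hn) p pl).
  by rewrite -sumnE sum_lam.
have hle : forall X, X \in G -> forall z, z \in X -> z <= m + n - 4.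
  move=> X XG z zX.
  have Hb : forall X, X \in enum_fset G -> count (fun z => z \in R) X <= m.
    by move=> Y YG; case: (hG Y YG) => <- _; apply: count_size.
  have Hs : \sum_(X <- enum_fset G) m <= \sum_(X <- enum_fset G) count (fun z => z \in R) X.
    by rewrite S1 sum_const_nat cG.
  have := sum_eq_bound Hb Hs X XG.
  case: (hG X XG) => cX _ e.
  have : all (fun z => z \in R) X by rewrite all_count e cX.
  by move/allP => /(_ z zX); rewrite mem_iota; lia.
have hdec : forall X, X \in G -> exists x y : nat, [/\ m - 1 <= x, x < y, y <= m + n - 4 & X = mk m x y].
  by move=> X XG; apply: decomp => //; [exact: hG | exact: hbase | exact: hle].
have hgood : forall X, X \in G -> X \in F56 m n.
  move=> X XG; case: (hdec X XG) => x [y [hx1 hx2 hx3 eX]].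
  apply/inF => //; exists x, y; split => //.
  rewrite /good; case: (eqVneq x (m - 1)) => ex.
    by apply/and4P; split; lia.
  case: (leqP y (m + 2)) => hy.
    by apply/and4P; split; lia.
  exfalso.
  pose R' := iota m (n - 3).
  pose P := fun v (Y : {fset nat}) => (m - 1 \in Y) && (v \in Y).
  have Hcnt : forall v, v \in R' -> count (P v) (enum_fset G) <= 1.
    move=> v; rewrite mem_iota => hv; apply: count_le1; first exact: fset_uniq.
    move=> Y1 Y2 Y1G Y2G /andP[a1 b1] /andP[a2 b2].
    case: (hdec Y1 Y1G) => x1 [y1 [h1 h1' h1'' e1]]; case: (hdec Y2 Y2G) => x2 [y2 [h2 h2' h2'' e2]].
    move: a1 b1 a2 b2; rewrite e1 e2 !mem_mk_m1; try lia.
    rewrite !mem_mk => /eqP ex1 b1 /eqP ex2 b2.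
    have ey1 : y1 = v by lia.
    have ey2 : y2 = v by lia.
    by rewrite ex1 ex2 ey1 ey2.
  have Hsum : \sum_(v <- R') (count (P v) (enum_fset G)) = n - 3.
    rewrite (@swap_count _ _ R' (enum_fset G) P).
    transitivity (\sum_(Y <- enum_fset G) ((m - 1 \in Y) : nat)).
      apply: eq_big_seq => Y YG.
      case: (hdec Y YG) => x1 [y1 [h1 h1' h1'' e1]].
      rewrite /P e1 mem_mk_m1; last by lia.
      case: (eqVneq x1 (m - 1)) => ex1 /=.
      + rewrite (@eq_in_count _ _ (pred1 y1)).
          by rewrite count_uniq_mem ?iota_uniq // mem_iota; lia.
        by move=> v; rewrite mem_iota mem_mk /=; lia.
      + by rewrite count_pred0.
    by rewrite sum_bool hT'; lia.
  have Hall1 : forall v, v \in R' -> count (P v) (enum_fset G) = 1.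
    apply: sum_eq_bound => //.
    by rewrite Hsum sum_const_nat size_iota muln1.
  have yR : y \in R' by rewrite mem_iota; lia.
  have : has (P y) (enum_fset G) by rewrite has_count Hall1.
  case/hasP => Y YG /andP[mY yY].
  have cy : count (fun Z : {fset nat} => y \in Z) (enum_fset G) <= 1.
    by rewrite hT'; lia.
  have yX : y \in X by rewrite eX mem_mk eqxx !orbT.
  have eXY := count_le1_eq cy XG YG yX yY.
  move: mY; rewrite -eXY eX mem_mk_m1; last by lia.
  by rewrite (negbTE ex).
have sub : fsubset G (F56 m n) by apply/fsubsetP.
apply/eqP; rewrite -(fsubset_leqif_cards sub).2 cG card_F //.
Qed.

Lemma nth_le_sumn (s : seq nat) i : nth 0 s i <= sumn s.
Proof. elim: s i => [|x s IH] [|i] //=; [lia | have := IH i; lia]. Qed.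

Lemma star_part (m n : nat) (nu : seq nat) : 2 <= m -> 6 <= n ->
  is_partition_of (n - 1) nu -> size nu <= m -> ~~ same_partition (lam56 m n) (star m n nu).
Proof.
move=> hm hn /andP[/andP[_ _] /eqP hs] _.
have hnth : forall i, nth 0 nu i <= n - 1 by move=> i; rewrite -hs nth_le_sumn.
have h01 : forall i, nth 0 nu 0 + nth 0 nu i.+1 <= n - 1.
  move=> i; rewrite -hs; case: (nu) => [|a r] /=; first by lia.
  have := nth_le_sumn r i; lia.
have h012 : nth 0 nu 0 + nth 0 nu 1 + nth 0 nu 2 <= n - 1.
  rewrite -hs; case: (nu) => [|a [|b [|c r]]] /=; lia.
have cnt : forall j, (forall i, j.+1 + nth 0 nu i <= n) ->
    count (fun i => j.+1 + nth 0 nu i <= n) (iota 0 m) = m.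
  move=> j hj; rewrite (eq_count (a2 := predT)) ?count_predT ?size_iota //.
have [k ek] : exists k, n = k.+3 by exists (n - 3); lia.
rewrite /same_partition /lam56 /star [X in mkseq _ X]ek /mkseq /=.
rewrite cnt; last by move=> i; have := hnth i; lia.
have -> : (0 < m + n - 4) = true by lia.
have -> : (0 < m + 2) = true by lia.
have -> : (0 < m + nth 0 nu 0) = true by lia.
rewrite eqseq_cons; apply/negP => /andP[/eqP e0].
have hb : forall j, j <= 2 -> forall i, j.+1 + nth 0 nu i <= n.
  by move=> j hj [|i]; [lia | have := h01 i; lia].
rewrite !cnt; try exact: hb.
have -> : (0 < m + nth 0 nu 1) = true by lia.
have -> : (0 < m + nth 0 nu 2) = true by lia.
rewrite !eqseq_cons => /andP[/eqP e1 /andP[/eqP e2 _]].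
lia.
Qed.


Local Open Scope fset_scope.

Theorem lemma5p6 (m n : nat) (hn : 6 <= n) (hm : 2 <= m) :
  (exists F : {fset {fset nat}},
     [/\ shape_family m n F, has_type (lam56 m n) F,
         (forall X : {fset nat},
            X \in F <-> (in_downset m (A56 m) X \/ in_downset m (B56 m n) X)) &
         (forall G : {fset {fset nat}},
            shape_family m n G -> has_type (lam56 m n) G -> G = F)])
  /\
  (forall nu : seq nat, is_partition_of (n - 1) nu -> size nu <= m ->
     ~~ same_partition (lam56 m n) (star m n nu)).
Proof.
split.
- exists (F56 m n); split.
  + split; first exact: card_F.
    move=> X /(inF _ _ _ hm hn) [x [y [g ->]]].
    by apply: msubset_mk => //; move: g => /and4P[h1 h2 _ _]; apply/andP.
  + exact: type_F.
  + move=> X; split => H.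
    * by apply/(downset_iff _ _ _ hm hn); apply/(inF _ _ _ hm hn).
    * by apply/(inF _ _ _ hm hn); apply/(downset_iff _ _ _ hm hn).
  + by move=> G hG hT; apply: uniqueness.
- by move=> nu hnu hs; apply: star_part.
Qed.
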